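(* Every class $[\mathfrak{p}]\in\mathfrak{F}_4''$ contains a unique quadruple of the form $$p_1=(1,\tan a),\quad p_2=\infty,\quad p_3=(0,0),\quad p_4=(z,t),$$ where $a\in(-\pi/2,\pi/2)$ (in fact $a=\mathbb{A}(p_1,p_2,p_3)$), $z\in\mathbb{C}\setminus\{0\}$, $t\in\mathbb{R}$ and $t\neq |z|^2\tan a$. The map $\mathcal{B}_0:\mathfrak{F}_4''\to\mathcal{C}'(\mathfrak{H}^\star)$, $\mathcal{B}_0([\mathfrak{p}])=(z,t,e^{\tan a})$, is a well-defined bijection onto $$\mathcal{C}'(\mathfrak{H}^\star)=\{(z,t,r)\in(\mathbb{C}\setminus\{0\})\times\mathbb{R}\times\mathbb{R}_{>0}\;:\;\log r\neq t/|z|^2\}.$$ Consequently $\mathfrak{F}_4''$ inherits (by transport of structure via $\mathcal{B}_0$) the Kähler structure of the open subset $\mathcal{C}'(\mathfrak{H}^\star)$ of the Riemannian cone $\mathcal{C}(\mathfrak{H}^\star)$.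
   Context: Let $\mathbb{C}^{2,1}$ denote $\mathbb{C}^3$ with the Hermitian form $\langle \mathbf z,\mathbf w\rangle=z_1\overline{w_3}+z_2\overline{w_2}+z_3\overline{w_1}$. The boundary $\partial\mathbf{H}^2_\mathbb{C}$ of complex hyperbolic plane is the set of complex lines of null vectors; it is identified with $(\mathbb{C}\times\mathbb{R})\cup\{\infty\}$, where $(z,t)$ corresponds to the line spanned by $(-|z|^2+it,\sqrt2 z,1)^T$ and $\infty$ to the line spanned by $(1,0,0)^T$. The group ${\rm PU}(2,1)$ (projectivised unitary group of $\langle\cdot,\cdot\rangle$) acts on $\partial\mathbf{H}^2_\mathbb{C}$. A $\mathbb{C}$-circle is the intersection of $\partial\mathbf{H}^2_\mathbb{C}$ with the projectivisation of a complex 2-dimensional subspace of $\mathbb{C}^{2,1}$ on which the form has signature $(1,1)$ (i.e. the boundary of a complex geodesic). Cartan's angular invariant of a triple of distinct boundary points with lifts $\mathbf p_i$ is $\mathbb{A}(p_1,p_2,p_3)=\arg\left(-\langle\mathbf p_1,\mathbf p_2\rangle\langle\mathbf p_2,\mathbf p_3\rangle\langle\mathbf p_3,\mathbf p_1\rangle\right)\in[-\pi/2,\pi/2]$. Let $\mathfrak{C}_4''$ be the set of ordered quadruples $\mathfrak{p}=(p_1,p_2,p_3,p_4)$ of pairwise distinct points of $\partial\mathbf{H}^2_\mathbb{C}$ such that: $p_1,p_2,p_3$ do not lie on a common $\mathbb{C}$-circle; $p_2,p_3,p_4$ do not lie on a common $\mathbb{C}$-circle; and $p_4$ is not in the orbit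 of $p_1$ under the subgroup of ${\rm PU}(2,1)$ fixing $p_2$ and $p_3$. Let $\mathfrak{F}_4''=\mathfrak{C}_4''/{\rm PU}(2,1)$ (diagonal action). The affine-rotational group $\mathfrak{H}^\star$ is $(\mathbb{C}\setminus\{0\})\times\mathbb{R}$ with product $(z,t)\star(w,s)=(zw,t+s|z|^2)$. On it, with $z=x+iy$, let $\mathbf{X}=x\partial_x+y\partial_y$, $\mathbf{Y}=x\partial_y-y\partial_x-2|z|^2\partial_t$, $\mathbf{T}=x\partial_y-y\partial_x$, let $\omega^\star=\frac{dt+2x\,dy-2y\,dx}{2|z|^2}$, and let $g^\star$ be the Riemannian metric for which $\{\mathbf X,\mathbf Y,\mathbf T\}$ is orthonormal. The Riemannian cone is $\mathcal{C}(\mathfrak{H}^\star)=\mathfrak{H}^\star\times\mathbb{R}_{>0}$ with metric $dr^2+r^2g^\star$, almost complex structure $\mathbb{J}\mathbf X=\mathbf Y$, $\mathbb{J}\mathbf Y=-\mathbf X$, $\mathbb{J}\mathbf T=-r\partial_r$, $\mathbb{J}(r\partial_r)=\mathbf T$, and 2-form $d(r^2\omega^\star/2)$; this is a Kähler manifold. *)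

(* Defs.v *)
From Stdlib Require Import Reals.
Open Scope R_scope.

Record C := mkC { re : R; im : R }.
Definition C0 : C := mkC 0 0.
Definition C1 : C := mkC 1 0.
Definition RtoC (r : R) : C := mkC r 0.
Definition Cadd (a b : C) : C := mkC (re a + re b) (im a + im b).
Definition Cmul (a b : C) : C :=
  mkC (re a * re b - im a * im b) (re a * im b + im a * re b).
Definition Copp (a : C) : C := mkC (- re a) (- im a).
Definition Cconj (a : C) : C := mkC (re a) (- im a).
Definition Cnorm2 (a : C) : R := re a * re a + im a * im a.

Record V3 := mkV { c1 : C; c2 : C; c3 : C }.
Definition V0 : V3 := mkV C0 C0 C0.
Definition Vscale (l : C) (v : V3) : V3 :=
  mkV (Cmul l (c1 v)) (Cmul l (c2 v)) (Cmul l (c3 v)).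
Definition Vadd (v w : V3) : V3 :=
  mkV (Cadd (c1 v) (c1 w)) (Cadd (c2 v) (c2 w)) (Cadd (c3 v) (c3 w)).

Definition herm (v w : V3) : C :=
  Cadd (Cadd (Cmul (c1 v) (Cconj (c3 w))) (Cmul (c2 v) (Cconj (c2 w))))
       (Cmul (c3 v) (Cconj (c1 w))).

Definition Mat3 := nat -> nat -> C.
Definition row_app (g : Mat3) (i : nat) (v : V3) : C :=
  Cadd (Cadd (Cmul (g i 0%nat) (c1 v)) (Cmul (g i 1%nat) (c2 v)))
       (Cmul (g i 2%nat) (c3 v)).
Definition Mapp (g : Mat3) (v : V3) : V3 :=
  mkV (row_app g 0%nat v) (row_app g 1%nat v) (row_app g 2%nat v).

(** U(2,1): matrices preserving the Hermitian form (automatically invertible,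
    the form being non-degenerate). PU(2,1) acts on boundary points
    (projective null lines) through U(2,1). *)
Definition unitary21 (g : Mat3) : Prop :=
  forall v w, herm (Mapp g v) (Mapp g w) = herm v w.

(** A boundary point is represented by a lift: a nonzero null vector;
    two lifts represent the same point iff they span the same complex line. *)
Definition is_bpt (v : V3) : Prop := v <> V0 /\ herm v v = C0.
Definition same_line (v w : V3) : Prop :=
  exists l : C, l <> C0 /\ v = Vscale l w.

Definition bpt (z : C) (t : R) : V3 :=
  mkV (mkC (- Cnorm2 z) t) (Cmul (RtoC (sqrt 2)) z) C1.
Definition binf : V3 := mkV C1 C0 C0.

(** complex 2-dim subspace of signature (1,1), given by an orthogonal
    basis u (positive) , v (negative); p lies in it *)
Definition in_span (u v p : V3) : Prop :=
  exists a b : C, p = Vadd (Vscale a u) (Vscale b v).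
Definition sig11_basis (u v : V3) : Prop :=
  re (herm u u) > 0 /\ im (herm u u) = 0 /\
  re (herm v v) < 0 /\ im (herm v v) = 0 /\ herm u v = C0.
Definition on_common_Ccircle (p q r : V3) : Prop :=
  exists u v, sig11_basis u v /\ in_span u v p /\ in_span u v q /\ in_span u v r.

Definition cartan_triple (p1 p2 p3 : V3) : C :=
  Copp (Cmul (Cmul (herm p1 p2) (herm p2 p3)) (herm p3 p1)).
Definition cartan_is (p1 p2 p3 : V3) (a : R) : Prop :=
  - (PI / 2) <= a <= PI / 2 /\
  exists rho : R, rho > 0 /\
    cartan_triple p1 p2 p3 = mkC (rho * cos a) (rho * sin a).

Record Quad := mkQ { q1 : V3; q2 : V3; q3 : V3; q4 : V3 }.

Definition in_C4pp (q : Quad) : Prop :=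
  is_bpt (q1 q) /\ is_bpt (q2 q) /\ is_bpt (q3 q) /\ is_bpt (q4 q) /\
  ~ same_line (q1 q) (q2 q) /\ ~ same_line (q1 q) (q3 q) /\
  ~ same_line (q1 q) (q4 q) /\ ~ same_line (q2 q) (q3 q) /\
  ~ same_line (q2 q) (q4 q) /\ ~ same_line (q3 q) (q4 q) /\
  ~ on_common_Ccircle (q1 q) (q2 q) (q3 q) /\
  ~ on_common_Ccircle (q2 q) (q3 q) (q4 q) /\
  ~ (exists g, unitary21 g /\ same_line (Mapp g (q2 q)) (q2 q) /\
        same_line (Mapp g (q3 q)) (q3 q) /\ same_line (Mapp g (q1 q)) (q4 q)).

Definition equivQ (q q' : Quad) : Prop :=
  exists g, unitary21 g /\
    same_line (Mapp g (q1 q)) (q1 q') /\ same_line (Mapp g (q2 q)) (q2 q') /\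
    same_line (Mapp g (q3 q)) (q3 q') /\ same_line (Mapp g (q4 q)) (q4 q').

Definition normal_quad (a : R) (z : C) (t : R) : Quad :=
  mkQ (bpt C1 (tan a)) binf (bpt C0 0) (bpt z t).

Definition normal_params (a : R) (z : C) (t : R) : Prop :=
  - (PI / 2) < a < PI / 2 /\ z <> C0 /\ t <> Cnorm2 z * tan a.

Definition B0rel (q : Quad) (z : C) (t r : R) : Prop :=
  exists a, normal_params a z t /\ equivQ q (normal_quad a z t) /\
            r = exp (tan a).

Definition in_Cprime (z : C) (t r : R) : Prop :=
  z <> C0 /\ r > 0 /\ ln r <> t / Cnorm2 z.

(* Main.v *)
Require Import Defs.
From Stdlib Require Import Reals Lra Psatz Classical.
Import Defs.
Open Scope R_scope.


Lemma C_ext : forall a b : C, re a = re b -> im a = im b -> a = b.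
Proof. intros [] []; simpl; intros; subst; auto. Qed.

Definition Csub a b := Cadd a (Copp b).
Lemma Cring : ring_theory C0 C1 Cadd Cmul Csub Copp (@eq C).
Proof. constructor; intros; apply C_ext; simpl; ring. Qed.
Add Ring Cring : Cring.

Lemma V_ext : forall v w : V3, c1 v = c1 w -> c2 v = c2 w -> c3 v = c3 w -> v = w.
Proof. intros [] []; simpl; intros; subst; auto. Qed.

Definition Cinv (a : C) : C := mkC (re a / Cnorm2 a) (- im a / Cnorm2 a).

Lemma Cnorm2_pos : forall a, a <> C0 -> Cnorm2 a > 0.
Proof.
  intros [x y] H; unfold Cnorm2; simpl.
  destruct (Req_dec x 0); destruct (Req_dec y 0); subst.
  - exfalso; apply H; reflexivity.
  - nra. - nra. - nra.
Qed.

Lemma Cinv_l : forall a, a <> C0 -> Cmul (Cinv a) a = C1.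
Proof.
  intros a H; pose proof (Cnorm2_pos a H) as P.
  destruct a as [x y]; unfold Cinv, Cnorm2 in *; simpl in *.
  apply C_ext; simpl; field; lra.
Qed.

Lemma C1_neq_C0 : C1 <> C0.
Proof. intro H; injection H; lra. Qed.

Lemma Cmul_neq0 : forall a b, a <> C0 -> b <> C0 -> Cmul a b <> C0.
Proof.
  intros a b Ha Hb H.
  apply Hb. replace b with (Cmul (Cmul (Cinv a) a) b) by (rewrite Cinv_l; auto; ring).
  replace (Cmul (Cmul (Cinv a) a) b) with (Cmul (Cinv a) (Cmul a b)) by ring.
  rewrite H; ring.
Qed.

Lemma Cinv_neq0 : forall a, a <> C0 -> Cinv a <> C0.
Proof. intros a H H'. pose proof (Cinv_l a H). rewrite H' in H0.
  apply C1_neq_C0; rewrite <- H0; ring. Qed.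

Lemma Cmul_eq1_neq0 : forall a b, Cmul a b = C1 -> b <> C0.
Proof. intros a b H H'; subst; apply C1_neq_C0; rewrite <- H; ring. Qed.

Lemma Cconj_add : forall a b, Cconj (Cadd a b) = Cadd (Cconj a) (Cconj b).
Proof. intros; apply C_ext; simpl; ring. Qed.
Lemma Cconj_mul : forall a b, Cconj (Cmul a b) = Cmul (Cconj a) (Cconj b).
Proof. intros; apply C_ext; simpl; ring. Qed.
Lemma Cconj_opp : forall a, Cconj (Copp a) = Copp (Cconj a).
Proof. intros; apply C_ext; simpl; ring. Qed.
Lemma Cconj_C0 : Cconj C0 = C0.
Proof. apply C_ext; simpl; ring. Qed.
Lemma Cconj_C1 : Cconj C1 = C1.
Proof. apply C_ext; simpl; ring. Qed.
Lemma Cconj_conj : forall a, Cconj (Cconj a) = a.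
Proof. intros; apply C_ext; simpl; ring. Qed.

Lemma Vscale_1 : forall v, Vscale C1 v = v.
Proof. intros; apply V_ext; simpl; ring. Qed.
Lemma Vscale_mul : forall a b v, Vscale a (Vscale b v) = Vscale (Cmul a b) v.
Proof. intros; apply V_ext; simpl; ring. Qed.

Lemma sl_refl : forall v, same_line v v.
Proof. intros; exists C1; split; [apply C1_neq_C0 | now rewrite Vscale_1]. Qed.
Lemma sl_eq : forall v w, v = w -> same_line v w.
Proof. intros; subst; apply sl_refl. Qed.
Lemma sl_sym : forall v w, same_line v w -> same_line w v.
Proof.
  intros v w [l [Hl ->]]. exists (Cinv l); split; [now apply Cinv_neq0|].
  rewrite Vscale_mul, Cinv_l, Vscale_1; auto.
Qed.
Lemma sl_trans : forall u v w, same_line u v -> same_line v w -> same_line u w.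
Proof.
  intros u v w [l [Hl ->]] [m [Hm ->]]. exists (Cmul l m); split.
  now apply Cmul_neq0. now rewrite Vscale_mul.
Qed.
Lemma sl_scale : forall l v, l <> C0 -> same_line (Vscale l v) v.
Proof. intros; exists l; auto. Qed.

Lemma Mapp_scale : forall g l v, Mapp g (Vscale l v) = Vscale l (Mapp g v).
Proof. intros; apply V_ext; unfold Mapp, row_app; simpl; ring. Qed.
Lemma Mapp_add : forall g v w, Mapp g (Vadd v w) = Vadd (Mapp g v) (Mapp g w).
Proof. intros; apply V_ext; unfold Mapp, row_app; simpl; ring. Qed.
Lemma Mapp_V0 : forall g, Mapp g V0 = V0.
Proof. intros; apply V_ext; unfold Mapp, row_app; simpl; ring. Qed.

Lemma sl_Mapp : forall g v w, same_line v w -> same_line (Mapp g v) (Mapp g w).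
Proof. intros g v w [l [Hl ->]]; exists l; split; auto; apply Mapp_scale. Qed.

Definition colv (h : Mat3) (j : nat) : V3 := mkV (h 0%nat j) (h 1%nat j) (h 2%nat j).
Definition Mmul (g h : Mat3) : Mat3 := fun i j => row_app g i (colv h j).
Lemma Mapp_Mmul : forall g h v, Mapp (Mmul g h) v = Mapp g (Mapp h v).
Proof. intros; apply V_ext; unfold Mapp, Mmul, row_app, colv; simpl; ring. Qed.

Lemma unitary_Mmul : forall g h, unitary21 g -> unitary21 h -> unitary21 (Mmul g h).
Proof. intros g h Hg Hh v w; rewrite !Mapp_Mmul, Hg, Hh; auto. Qed.

Lemma herm_scale : forall a b v w,
  herm (Vscale a v) (Vscale b w) = Cmul (Cmul a (Cconj b)) (herm v w).
Proof.
  intros; unfold herm; simpl; rewrite !Cconj_mul, ?Cconj_add; ring.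
Qed.


Definition ej (j : nat) : V3 :=
  match j with
  | 0%nat => mkV C1 C0 C0
  | 1%nat => mkV C0 C1 C0
  | _ => mkV C0 C0 C1
  end.
Definition comp (i : nat) (v : V3) : C :=
  match i with 0%nat => c1 v | 1%nat => c2 v | _ => c3 v end.

Definition hinv (M : Mat3) : Mat3 := fun i j => Cconj (M (2 - j)%nat (2 - i)%nat).

Ltac conjpush := repeat (rewrite ?Cconj_add, ?Cconj_mul, ?Cconj_opp, ?Cconj_C0, ?Cconj_C1, ?Cconj_conj).

Lemma hinv_left : forall M, unitary21 M -> forall v, Mapp (hinv M) (Mapp M v) = v.
Proof.
  intros M HM v.
  assert (E1 : c1 (Mapp (hinv M) (Mapp M v)) = herm (Mapp M v) (Mapp M (ej 2))).
  { unfold hinv, herm, Mapp, row_app, ej; simpl; conjpush; ring. }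
  assert (E2 : c2 (Mapp (hinv M) (Mapp M v)) = herm (Mapp M v) (Mapp M (ej 1))).
  { unfold hinv, herm, Mapp, row_app, ej; simpl; conjpush; ring. }
  assert (E3 : c3 (Mapp (hinv M) (Mapp M v)) = herm (Mapp M v) (Mapp M (ej 0))).
  { unfold hinv, herm, Mapp, row_app, ej; simpl; conjpush; ring. }
  rewrite HM in E1, E2, E3.
  apply V_ext; [rewrite E1|rewrite E2|rewrite E3]; unfold herm, ej; simpl; conjpush; ring.
Qed.

Definition det3 (M : Mat3) : C :=
  Cadd (Csub (Cmul (M 0%nat 0%nat) (Csub (Cmul (M 1%nat 1%nat) (M 2%nat 2%nat)) (Cmul (M 1%nat 2%nat) (M 2%nat 1%nat))))
             (Cmul (M 0%nat 1%nat) (Csub (Cmul (M 1%nat 0%nat) (M 2%nat 2%nat)) (Cmul (M 1%nat 2%nat) (M 2%nat 0%nat)))))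
       (Cmul (M 0%nat 2%nat) (Csub (Cmul (M 1%nat 0%nat) (M 2%nat 1%nat)) (Cmul (M 1%nat 1%nat) (M 2%nat 0%nat)))).

Definition adj (M : Mat3) : Mat3 := fun i j =>
  let m := fun a b => M a b in
  match i, j with
  | 0%nat, 0%nat => Csub (Cmul (m 1%nat 1%nat) (m 2%nat 2%nat)) (Cmul (m 1%nat 2%nat) (m 2%nat 1%nat))
  | 0%nat, 1%nat => Csub (Cmul (m 0%nat 2%nat) (m 2%nat 1%nat)) (Cmul (m 0%nat 1%nat) (m 2%nat 2%nat))
  | 0%nat, _ => Csub (Cmul (m 0%nat 1%nat) (m 1%nat 2%nat)) (Cmul (m 0%nat 2%nat) (m 1%nat 1%nat))
  | 1%nat, 0%nat => Csub (Cmul (m 1%nat 2%nat) (m 2%nat 0%nat)) (Cmul (m 1%nat 0%nat) (m 2%nat 2%nat))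
  | 1%nat, 1%nat => Csub (Cmul (m 0%nat 0%nat) (m 2%nat 2%nat)) (Cmul (m 0%nat 2%nat) (m 2%nat 0%nat))
  | 1%nat, _ => Csub (Cmul (m 0%nat 2%nat) (m 1%nat 0%nat)) (Cmul (m 0%nat 0%nat) (m 1%nat 2%nat))
  | _, 0%nat => Csub (Cmul (m 1%nat 0%nat) (m 2%nat 1%nat)) (Cmul (m 1%nat 1%nat) (m 2%nat 0%nat))
  | _, 1%nat => Csub (Cmul (m 0%nat 1%nat) (m 2%nat 0%nat)) (Cmul (m 0%nat 0%nat) (m 2%nat 1%nat))
  | _, _ => Csub (Cmul (m 0%nat 0%nat) (m 1%nat 1%nat)) (Cmul (m 0%nat 1%nat) (m 1%nat 0%nat))
  end.

Lemma adj_right : forall M w, Mapp M (Mapp (adj M) w) = Vscale (det3 M) w.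
Proof. intros; apply V_ext; unfold Mapp, row_app, adj, det3, Csub; simpl; ring. Qed.

Lemma det_mul : forall N M,
  det3 (fun i j => comp i (Mapp N (Mapp M (ej j)))) = Cmul (det3 N) (det3 M).
Proof. intros; unfold det3, comp, Mapp, row_app, ej, Csub; simpl; ring. Qed.

Lemma det_id : det3 (fun i j => comp i (ej j)) = C1.
Proof. unfold det3, comp, ej, Csub; simpl; ring. Qed.

Lemma unitary_inv : forall M, unitary21 M ->
  unitary21 (hinv M) /\ (forall v, Mapp (hinv M) (Mapp M v) = v) /\
  (forall v, Mapp M (Mapp (hinv M) v) = v).
Proof.
  intros M HM.
  pose proof (hinv_left M HM) as HL.
  assert (Hd : Cmul (det3 (hinv M)) (det3 M) = C1).
  { rewrite <- det_mul. rewrite <- det_id. unfold det3. rewrite !HL. reflexivity. }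
  pose proof (Cmul_eq1_neq0 _ _ Hd) as Hd0.
  assert (HR : forall v, Mapp M (Mapp (hinv M) v) = v).
  { intro w.
    set (s := Vscale (Cinv (det3 M)) (Mapp (adj M) w)).
    assert (Hs : Mapp M s = w).
    { unfold s; rewrite Mapp_scale, adj_right, Vscale_mul, Cinv_l; auto; apply Vscale_1. }
    rewrite <- Hs at 2. rewrite <- Hs at 1. rewrite HL. reflexivity. }
  split; [|split; auto].
  intros v w. rewrite <- (HM (Mapp (hinv M) v)), !HR. reflexivity.
Qed.


Lemma s2pos : sqrt 2 > 0.
Proof. apply sqrt_lt_R0; lra. Qed.
Lemma s2sq : sqrt 2 * sqrt 2 = 2.
Proof. apply sqrt_sqrt; lra. Qed.

Lemma e3_eq : bpt C0 0 = mkV C0 C0 C1.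
Proof. apply V_ext; apply C_ext; simpl; unfold Cnorm2; simpl; ring. Qed.

Lemma herm_re : forall v, re (herm v v) =
  2 * (re (c1 v) * re (c3 v) + im (c1 v) * im (c3 v)) + Cnorm2 (c2 v).
Proof. intros [[] [] []]; unfold herm, Cnorm2; simpl; ring. Qed.

Lemma bpt_null : forall z t, is_bpt (bpt z t).
Proof.
  intros z t; split.
  - intro H; apply (f_equal c3) in H; simpl in H; apply C1_neq_C0; exact H.
  - destruct z as [x y]; apply C_ext; unfold herm; simpl; unfold Cnorm2; simpl; [|ring].
    transitivity ((sqrt 2 * sqrt 2 - 2) * (x*x+y*y)); [ring | rewrite s2sq; ring].
Qed.

Lemma binf_null : is_bpt binf.
Proof.
  split. intro H; apply (f_equal c1) in H; simpl in H; apply C1_neq_C0; exact H.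
  apply C_ext; unfold herm; simpl; ring.
Qed.

Lemma null_c3_0 : forall v, herm v v = C0 -> c3 v = C0 -> c2 v = C0.
Proof.
  intros v H H3. pose proof (herm_re v) as R. rewrite H, H3 in R. simpl in R.
  destruct (c2 v) as [x y]; unfold Cnorm2 in R; simpl in R.
  apply C_ext; simpl; nra.
Qed.

Lemma not_binf_c3 : forall v, is_bpt v -> ~ same_line v binf -> c3 v <> C0.
Proof.
  intros v [Hn Hh] Hs H3. apply Hs. pose proof (null_c3_0 v Hh H3) as H2.
  exists (c1 v); split.
  - intro H1; apply Hn; apply V_ext; simpl; auto.
  - apply V_ext; simpl; [ring| rewrite H2; ring | rewrite H3; ring].
Qed.

Lemma unitary_null : forall g v, unitary21 g -> is_bpt v -> is_bpt (Mapp g v).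
Proof.
  intros g v Hg [Hn Hh]; split; [|now rewrite Hg].
  intro H. apply Hn. destruct (unitary_inv g Hg) as [_ [HL _]].
  rewrite <- (HL v), H. apply Mapp_V0.
Qed.

Lemma sl_unMapp : forall g v w, unitary21 g ->
  same_line (Mapp g v) (Mapp g w) -> same_line v w.
Proof.
  intros g v w Hg H. destruct (unitary_inv g Hg) as [_ [HL _]].
  rewrite <- (HL v), <- (HL w). now apply sl_Mapp.
Qed.

Definition normz (y : V3) : V3 := Vscale (Cinv (c3 y)) y.

Lemma normz_prop : forall y, is_bpt y -> c3 y <> C0 ->
  c3 (normz y) = C1 /\ is_bpt (normz y) /\ same_line y (normz y).
Proof.
  intros y [Hn Hh] H3. unfold normz. split; [|split].
  - simpl. rewrite Cinv_l; auto.
  - split.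
    + intro H. apply (f_equal c3) in H; simpl in H. rewrite Cinv_l in H; auto.
      now apply C1_neq_C0.
    + rewrite herm_scale, Hh; ring.
  - apply sl_sym, sl_scale. now apply Cinv_neq0.
Qed.

Definition zof (y : V3) : C := Cmul (RtoC (/ sqrt 2)) (c2 y).
Definition tof (y : V3) : R := im (c1 y).

Lemma bpt_of : forall y, herm y y = C0 -> c3 y = C1 -> y = bpt (zof y) (tof y).
Proof.
  intros y Hh H3. pose proof (herm_re y) as R. rewrite Hh, H3 in R; simpl in R.
  pose proof s2pos; pose proof s2sq.
  destruct y as [[a b] [c d] y3]; simpl in *; subst y3.
  unfold bpt, zof, tof, Cnorm2 in *; simpl in *.
  assert (Hi : / sqrt 2 * / sqrt 2 = / 2) by (rewrite <- Rinv_mult, H0; auto).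
  apply V_ext; simpl; apply C_ext; simpl; try ring.
  - transitivity (-(c*c+d*d) * (/sqrt 2 * /sqrt 2)); [ | ring]. rewrite Hi. lra.
  - field; lra.
  - field; lra.
Qed.

Lemma bpt_inj : forall z t z' t', bpt z t = bpt z' t' -> z = z' /\ t = t'.
Proof.
  intros z t z' t' H. pose proof s2pos.
  pose proof (f_equal c1 H) as H1; pose proof (f_equal c2 H) as H2. simpl in *.
  apply (f_equal im) in H1; simpl in H1. split; auto.
  destruct z, z'; simpl in H2; injection H2; intros.
  apply C_ext; simpl; nra.
Qed.

Lemma sl_bpt : forall z t z' t', same_line (bpt z t) (bpt z' t') -> z = z' /\ t = t'.
Proof.
  intros z t z' t' [l [Hl H]]. apply bpt_inj.
  assert (l = C1). { apply (f_equal c3) in H; simpl in H. rewrite H; ring. }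
  subst l; rewrite Vscale_1 in H; auto.
Qed.

Lemma sl_bpt_binf : forall z t, ~ same_line (bpt z t) binf.
Proof.
  intros z t [l [Hl H]]. apply (f_equal c3) in H; simpl in H.
  apply C1_neq_C0; rewrite H; ring.
Qed.
Lemma sl_binf_bpt : forall z t, ~ same_line binf (bpt z t).
Proof. intros z t H; apply sl_sym in H; now apply sl_bpt_binf in H. Qed.


Definition e3v : V3 := mkV C0 C0 C1.

Definition Jm : Mat3 := fun i j =>
  match i, j with
  | 0%nat, 2%nat => C1 | 1%nat, 1%nat => C1 | 2%nat, 0%nat => C1 | _, _ => C0 end.
Lemma Jm_app : forall v, Mapp Jm v = mkV (c3 v) (c2 v) (c1 v).
Proof. intros; apply V_ext; unfold Mapp, row_app; simpl; ring. Qed.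
Lemma Jm_unitary : unitary21 Jm.
Proof. intros v w; rewrite !Jm_app; unfold herm; simpl; ring. Qed.

Definition Um (y : V3) : Mat3 := fun i j =>
  match i, j with
  | 0%nat, 0%nat => C1 | 0%nat, 1%nat => Cconj (c2 y) | 0%nat, 2%nat => Cconj (c1 y)
  | 1%nat, 1%nat => C1 | 1%nat, 2%nat => Copp (c2 y) | 2%nat, 2%nat => C1
  | _, _ => C0 end.

Lemma Um_unitary : forall y, herm y y = C0 -> c3 y = C1 -> unitary21 (Um y).
Proof.
  intros y Hh H3 v w. pose proof (herm_re y) as R. rewrite Hh, H3 in R; simpl in R.
  destruct y as [[a b] [c d] y3]; simpl in *. unfold Cnorm2 in R; simpl in R.
  assert (Ha : a = - (c*c+d*d)/2) by lra. subst a.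
  destruct v as [[v1 v2] [v3 v4] [v5 v6]], w as [[w1 w2] [w3 w4] [w5 w6]].
  unfold herm, Mapp, row_app, Um; simpl. apply C_ext; simpl; field.
Qed.

Lemma Um_y : forall y, herm y y = C0 -> c3 y = C1 -> Mapp (Um y) y = e3v.
Proof.
  intros y Hh H3. pose proof (herm_re y) as R. rewrite Hh, H3 in R; simpl in R.
  destruct y as [[a b] [c d] y3]; simpl in *. subst y3. unfold Cnorm2 in R; simpl in R.
  unfold Mapp, row_app, Um, e3v; simpl. apply V_ext; apply C_ext; simpl; lra.
Qed.

Lemma Um_binf : forall y, Mapp (Um y) binf = binf.
Proof. intros; unfold Mapp, row_app, Um, binf; simpl; apply V_ext; simpl; ring. Qed.

Definition Dg (n : C) : Mat3 := fun i j =>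
  match i, j with
  | 0%nat, 0%nat => Cinv (Cconj n) | 1%nat, 1%nat => C1 | 2%nat, 2%nat => n
  | _, _ => C0 end.
Lemma Dg_app : forall n v, Mapp (Dg n) v = mkV (Cmul (Cinv (Cconj n)) (c1 v)) (c2 v) (Cmul n (c3 v)).
Proof. intros; apply V_ext; unfold Mapp, row_app; simpl; ring. Qed.
Lemma Dg_unitary : forall n, n <> C0 -> unitary21 (Dg n).
Proof.
  intros n Hn v w. rewrite !Dg_app. pose proof (Cnorm2_pos n Hn) as P.
  destruct n as [a b]; unfold Cnorm2 in P; simpl in P.
  destruct v as [[v1 v2] [v3 v4] [v5 v6]], w as [[w1 w2] [w3 w4] [w5 w6]].
  unfold herm, Cinv, Cnorm2; simpl. apply C_ext; simpl; field; lra.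
Qed.

Lemma step : forall y, is_bpt y -> ~ same_line y binf ->
  exists g, unitary21 g /\ Mapp g binf = binf /\ same_line (Mapp g y) e3v.
Proof.
  intros y Hy Hn. pose proof (not_binf_c3 y Hy Hn) as H3.
  destruct (normz_prop y Hy H3) as [Hc [[_ Hh] Hs]].
  exists (Um (normz y)); split; [|split].
  - now apply Um_unitary.
  - apply Um_binf.
  - eapply sl_trans; [apply sl_Mapp; exact Hs|]. rewrite Um_y; auto. apply sl_refl.
Qed.

Lemma frame : forall x y, is_bpt x -> is_bpt y -> ~ same_line x y ->
  exists g, unitary21 g /\ same_line (Mapp g x) binf /\ same_line (Mapp g y) e3v.
Proof.
  intros x y Hx Hy Hxy.
  destruct (classic (same_line x binf)) as [Hb|Hb].
  - assert (Hyb : ~ same_line y binf).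
    { intro H; apply Hxy; eapply sl_trans; [exact Hb| now apply sl_sym]. }
    destruct (step y Hy Hyb) as [g [Hg [Hgb Hgy]]].
    exists g; split; [|split]; auto.
    rewrite <- Hgb; now apply sl_Mapp.
  - destruct (step x Hx Hb) as [g0 [Hg0 [_ Hg0x]]].
    set (g1 := Mmul Jm g0).
    assert (Hg1 : unitary21 g1) by (apply unitary_Mmul; auto; apply Jm_unitary).
    assert (Hg1x : same_line (Mapp g1 x) binf).
    { unfold g1; rewrite Mapp_Mmul. eapply sl_trans; [apply sl_Mapp; exact Hg0x|].
      rewrite Jm_app; simpl; apply sl_refl. }
    assert (Hy1 : is_bpt (Mapp g1 y)) by (apply unitary_null; auto).
    assert (Hy1b : ~ same_line (Mapp g1 y) binf).
    { intro H; apply Hxy. apply sl_sym. apply (sl_unMapp g1); auto.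
      eapply sl_trans; [exact H| now apply sl_sym]. }
    destruct (step _ Hy1 Hy1b) as [g2 [Hg2 [Hg2b Hg2y]]].
    exists (Mmul g2 g1); split; [|split].
    + now apply unitary_Mmul.
    + rewrite Mapp_Mmul, <- Hg2b; now apply sl_Mapp.
    + now rewrite Mapp_Mmul.
Qed.


Lemma equivQ_sym : forall q q', equivQ q q' -> equivQ q' q.
Proof.
  intros q q' [g [Hg [H1 [H2 [H3 H4]]]]].
  destruct (unitary_inv g Hg) as [Hi [HL _]].
  exists (hinv g); split; auto.
  repeat split; (eapply sl_trans; [apply sl_Mapp; apply sl_sym; eassumption | apply sl_eq; apply HL]).
Qed.

Lemma equivQ_trans : forall q q' q'', equivQ q q' -> equivQ q' q'' -> equivQ q q''.
Proof.
  intros q q' q'' [g [Hg [H1 [H2 [H3 H4]]]]] [g' [Hg' [H1' [H2' [H3' H4']]]]].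
  exists (Mmul g' g); split; [now apply unitary_Mmul|].
  rewrite !Mapp_Mmul.
  repeat split; (eapply sl_trans; [apply sl_Mapp; eassumption| assumption]).
Qed.

Lemma sl_c2 : forall v w, same_line v w -> c2 w = C0 -> c2 v = C0.
Proof. intros v w [l [_ ->]] H; simpl; rewrite H; ring. Qed.

Definition RtoC' := RtoC.

Lemma circle : forall G p q r, unitary21 G ->
  c2 (Mapp G p) = C0 -> c2 (Mapp G q) = C0 -> c2 (Mapp G r) = C0 ->
  on_common_Ccircle p q r.
Proof.
  intros G p q r HG Hp Hq Hr.
  destruct (unitary_inv G HG) as [HN [HL HR]].
  set (N := hinv G) in *.
  exists (Mapp N (mkV C1 C0 C1)), (Mapp N (mkV C1 C0 (Copp C1))).
  assert (Hspan : forall x, c2 (Mapp G x) = C0 -> in_span (Mapp N (mkV C1 C0 C1)) (Mapp N (mkV C1 C0 (Copp C1))) x).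
  { intros x Hx. set (y := Mapp G x) in *.
    exists (Cmul (RtoC (/2)) (Cadd (c1 y) (c3 y))), (Cmul (RtoC (/2)) (Csub (c1 y) (c3 y))).
    rewrite <- !Mapp_scale, <- Mapp_add. rewrite <- (HL x). fold y. f_equal.
    destruct y as [[a b] [c d] [e f]]; simpl in Hx; injection Hx; intros; subst.
    apply V_ext; simpl; apply C_ext; simpl; field. }
  split; [|split; [|split]]; try (apply Hspan; assumption).
  unfold sig11_basis; rewrite !HN; unfold herm; simpl. repeat split; try lra. apply C_ext; simpl; ring.
Qed.

Definition det3v (x y z : V3) : C :=
  det3 (fun i j => comp i (match j with 0%nat => x | 1%nat => y | _ => z end)).

Lemma det_span : forall u v a1 b1 a2 b2 a3 b3,
  det3v (Vadd (Vscale a1 u) (Vscale b1 v)) (Vadd (Vscale a2 u) (Vscale b2 v))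
        (Vadd (Vscale a3 u) (Vscale b3 v)) = C0.
Proof. intros; unfold det3v, det3, comp, Csub; simpl; ring. Qed.

Lemma not_circle1 : forall p, c2 p <> C0 -> ~ on_common_Ccircle p binf e3v.
Proof.
  intros p Hp [u [v [_ [[a1 [b1 E1]] [[a2 [b2 E2]] [a3 [b3 E3]]]]]]].
  apply Hp. pose proof (det_span u v a1 b1 a2 b2 a3 b3) as D.
  rewrite <- E1, <- E2, <- E3 in D.
  transitivity (Copp (det3v p binf e3v)); [unfold det3v, det3, comp, Csub; simpl; ring | rewrite D; ring].
Qed.

Lemma not_circle2 : forall p, c2 p <> C0 -> ~ on_common_Ccircle binf e3v p.
Proof.
  intros p Hp [u [v [_ [[a1 [b1 E1]] [[a2 [b2 E2]] [a3 [b3 E3]]]]]]].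
  apply Hp. pose proof (det_span u v a1 b1 a2 b2 a3 b3) as D.
  rewrite <- E1, <- E2, <- E3 in D.
  transitivity (Copp (det3v binf e3v p)); [unfold det3v, det3, comp, Csub; simpl; ring | rewrite D; ring].
Qed.

Lemma gram : forall k tau z' t' al be ga, unitary21 k ->
 Mapp k binf = Vscale al binf -> Mapp k e3v = Vscale be e3v ->
 Mapp k (bpt C1 tau) = Vscale ga (bpt z' t') ->
 Cnorm2 z' = Cnorm2 al /\ t' = Cnorm2 al * tau /\
 be = Cmul (RtoC (/ Cnorm2 al)) al /\ ga = Cmul (RtoC (/Cnorm2 al)) al.
Proof.
  intros k tau z' t' al be ga Hk Hb He Hp.
  pose proof (Hk binf e3v) as F1; rewrite Hb, He, herm_scale in F1.
  pose proof (Hk (bpt C1 tau) binf) as F2; rewrite Hp, Hb, herm_scale in F2.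
  pose proof (Hk (bpt C1 tau) e3v) as F3; rewrite Hp, He, herm_scale in F3.
  destruct al as [a1 a2], be as [b1 b2], ga as [g1 g2], z' as [x y].
  unfold herm, bpt, Cnorm2 in *; simpl in *.
  pose proof (f_equal re F1) as F1r; pose proof (f_equal im F1) as F1i.
  pose proof (f_equal re F2) as F2r; pose proof (f_equal im F2) as F2i.
  pose proof (f_equal re F3) as F3r; pose proof (f_equal im F3) as F3i.
  simpl in *. clear F1 F2 F3. ring_simplify in F1r. ring_simplify in F1i.
  ring_simplify in F2r. ring_simplify in F2i. ring_simplify in F3r. ring_simplify in F3i.
  assert (Hn : a1*a1+a2*a2 > 0).
  { destruct (Req_dec a1 0), (Req_dec a2 0); subst; try nra. }
  set (n := a1*a1+a2*a2) in *.
  assert (Eb1 : b1 = a1 / n).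
  { apply (Rmult_eq_reg_l n); [|lra]. field_simplify; [|lra].
    transitivity (a1*(a1*b1+a2*b2) + a2*(-a1*b2+b1*a2)); [unfold n; ring|]. rewrite F1r, F1i; ring. }
  assert (Eb2 : b2 = a2 / n).
  { apply (Rmult_eq_reg_l n); [|lra]. field_simplify; [|lra].
    transitivity (a2*(a1*b1+a2*b2) - a1*(-a1*b2+b1*a2)); [unfold n; ring|]. rewrite F1r, F1i; ring. }
  assert (Eg1 : g1 = a1 / n).
  { apply (Rmult_eq_reg_l n); [|lra]. field_simplify; [|lra].
    transitivity (a1*(g1*a1+g2*a2) - a2*(-g1*a2+a1*g2)); [unfold n; ring|]. rewrite F2r, F2i; ring. }
  assert (Eg2 : g2 = a2 / n).
  { apply (Rmult_eq_reg_l n); [|lra]. field_simplify; [|lra].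
    transitivity (a2*(g1*a1+g2*a2) + a1*(-g1*a2+a1*g2)); [unfold n; ring|]. rewrite F2r, F2i; ring. }
  subst b1 b2 g1 g2.
  assert (K1 : (a1/n)*(a1/n) + (a2/n)*(a2/n) = / n) by (unfold n in *; field; lra).
  assert (X : x*x+y*y = n).
  { replace (- (a1/n) * (a1/n) * x ^ 2 - (a1/n) * (a1/n) * y ^ 2 + (a1/n) * (a2/n) * t' - (a1/n) * (a2/n) * t' -
    (a2/n) * (a2/n) * x ^ 2 - (a2/n) * (a2/n) * y ^ 2) with (-((a1/n)*(a1/n) + (a2/n)*(a2/n)) * (x*x+y*y)) in F3r by ring.
    rewrite K1 in F3r. apply (Rmult_eq_reg_l (/n)); [|apply Rinv_neq_0_compat; lra].
    rewrite Rinv_l by lra. lra. }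
  assert (T : t' = n * tau).
  { replace ((a1/n) * (a1/n) * t' + (a1/n) * (a2/n) * x ^ 2 + (a1/n) * (a2/n) * y ^ 2 - (a1/n) * (a2/n) * x ^ 2 -
    (a1/n) * (a2/n) * y ^ 2 + (a2/n) * (a2/n) * t') with (((a1/n)*(a1/n) + (a2/n)*(a2/n)) * t') in F3i by ring.
    rewrite K1 in F3i. rewrite <- F3i. field. lra. }
  split; [exact X|split; [exact T|]].
  split; apply C_ext; simpl; unfold n in *; field; lra.
Qed.

Lemma Cnorm2_C1 : Cnorm2 C1 = 1.
Proof. unfold Cnorm2; simpl; ring. Qed.

Lemma rigid : forall k tau tau' z t z' t', unitary21 k ->
  same_line (Mapp k binf) binf -> same_line (Mapp k e3v) e3v ->
  same_line (Mapp k (bpt C1 tau)) (bpt C1 tau') ->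
  same_line (Mapp k (bpt z t)) (bpt z' t') ->
  tau = tau' /\ z = z' /\ t = t'.
Proof.
  intros k tau tau' z t z' t' Hk [al [Hal Hb]] [be [_ He]] [ga [_ Hp]] [de [_ Hq]].
  destruct (gram k tau C1 tau' al be ga Hk Hb He Hp) as [N1 [T [Eb Eg]]].
  rewrite Cnorm2_C1 in N1. rewrite <- N1, Rmult_1_l in T. subst tau'.
  assert (Eb' : be = al) by (rewrite Eb, <- N1; apply C_ext; simpl; field).
  assert (Eg' : ga = al) by (rewrite Eg, <- N1; apply C_ext; simpl; field).
  clear Eb Eg; subst be ga.
  set (A := Csub (mkC (- Cnorm2 z) t) (Cmul z (mkC (- Cnorm2 C1) tau))).
  assert (Hdec : bpt z t = Vadd (Vadd (Vscale A binf) (Vscale z (bpt C1 tau))) (Vscale (Csub C1 z) e3v)).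
  { unfold A; apply V_ext; unfold Vadd, Vscale, bpt, binf, e3v, Csub; cbn [c1 c2 c3]; ring. }
  assert (Hk4 : Mapp k (bpt z t) = Vscale al (bpt z t)).
  { rewrite Hdec at 1. rewrite !Mapp_add, !Mapp_scale, Hb, He, Hp.
    rewrite Hdec. apply V_ext; unfold Vadd, Vscale, bpt, binf, e3v, Csub; cbn [c1 c2 c3]; ring. }
  rewrite Hk4 in Hq.
  assert (Ed : al = de).
  { pose proof (f_equal c3 Hq) as H3; simpl in H3.
    transitivity (Cmul al C1); [ring|]. rewrite H3; ring. }
  subst de. apply (f_equal (Vscale (Cinv al))) in Hq.
  rewrite !Vscale_mul, Cinv_l, !Vscale_1 in Hq by auto.
  destruct (bpt_inj _ _ _ _ Hq); auto.
Qed.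

Lemma orbit_excl : forall k tau z t, unitary21 k ->
  same_line (Mapp k binf) binf -> same_line (Mapp k e3v) e3v ->
  same_line (Mapp k (bpt C1 tau)) (bpt z t) -> t = Cnorm2 z * tau.
Proof.
  intros k tau z t Hk [al [Hal Hb]] [be [_ He]] [ga [_ Hp]].
  destruct (gram k tau z t al be ga Hk Hb He Hp) as [N1 [T _]].
  rewrite N1; auto.
Qed.

Lemma Dg_binf : forall n, Mapp (Dg n) binf = Vscale (Cinv (Cconj n)) binf.
Proof. intros; rewrite Dg_app; apply V_ext; unfold Vscale, binf; cbn [c1 c2 c3]; ring. Qed.
Lemma Dg_e3 : forall n, Mapp (Dg n) e3v = Vscale n e3v.
Proof. intros; rewrite Dg_app; apply V_ext; unfold Vscale, e3v; cbn [c1 c2 c3]; ring. Qed.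

Lemma Dg_map : forall y n, herm y y = C0 -> c3 y = C1 -> n <> C0 ->
  Cmul n (RtoC (sqrt 2)) = c2 y ->
  Mapp (Dg n) y = Vscale n (bpt C1 (im (c1 y) / Cnorm2 n)).
Proof.
  intros y n Hh H3 Hn H2. pose proof (herm_re y) as R. rewrite Hh, H3, <- H2 in R; simpl in R.
  pose proof (Cnorm2_pos n Hn) as P. pose proof s2sq as S.
  rewrite Dg_app. destruct y as [[a b] y2 y3]; simpl in *. subst y2 y3.
  destruct n as [n1 n2]; unfold Cnorm2 in *; simpl in *.
  assert (Ha : a = -(n1*n1+n2*n2)).
  { transitivity ((-(n1*n1+n2*n2)) * (sqrt 2 * sqrt 2) / 2); [|rewrite S; field].
    transitivity (a * 2 / 2); [field|]. f_equal. nra. }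
  subst a.
  apply V_ext; unfold Vscale, bpt, Cinv, Cnorm2; simpl; apply C_ext; simpl; field; lra.
Qed.

Lemma E_map : forall z tau, z <> C0 ->
  Mapp (Dg (Cinv z)) (bpt C1 tau) = Vscale (Cinv z) (bpt z (Cnorm2 z * tau)).
Proof.
  intros z tau Hz. rewrite Dg_app. pose proof (Cnorm2_pos z Hz) as P.
  destruct z as [x y]; unfold Cnorm2 in *; simpl in *.
  apply V_ext; unfold Vscale, bpt, Cinv, Cnorm2; simpl; apply C_ext; simpl; field; lra.
Qed.

Lemma Cmul_conj : forall l, Cmul l (Cconj l) = RtoC (Cnorm2 l).
Proof. intros [a b]; apply C_ext; unfold Cnorm2; simpl; ring. Qed.
Lemma RtoC_mul : forall a b, RtoC (a * b) = Cmul (RtoC a) (RtoC b).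
Proof. intros; apply C_ext; simpl; ring. Qed.

Lemma cartan_scale : forall G p1 p2 p3 N1 N2 N3 l1 l2 l3, unitary21 G ->
  Mapp G p1 = Vscale l1 N1 -> Mapp G p2 = Vscale l2 N2 -> Mapp G p3 = Vscale l3 N3 ->
  cartan_triple p1 p2 p3 =
  Cmul (RtoC (Cnorm2 l1 * Cnorm2 l2 * Cnorm2 l3)) (cartan_triple N1 N2 N3).
Proof.
  intros G p1 p2 p3 N1 N2 N3 l1 l2 l3 HG E1 E2 E3. unfold cartan_triple.
  rewrite <- (HG p1 p2), <- (HG p2 p3), <- (HG p3 p1), E1, E2, E3, !herm_scale.
  transitivity (Cmul (Cmul (Cmul (Cmul l1 (Cconj l1)) (Cmul l2 (Cconj l2))) (Cmul l3 (Cconj l3)))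
    (Copp (Cmul (Cmul (herm N1 N2) (herm N2 N3)) (herm N3 N1)))); [ring|].
  rewrite !Cmul_conj, !RtoC_mul; ring.
Qed.

Lemma cartan_normal : forall tau, cartan_triple (bpt C1 tau) binf (bpt C0 0) = mkC 1 tau.
Proof. intros; apply C_ext; unfold cartan_triple, herm, bpt, Cnorm2; simpl; ring. Qed.


Lemma Cconj_neq0 : forall n, n <> C0 -> Cconj n <> C0.
Proof. intros n H H'; apply H; rewrite <- (Cconj_conj n), H'; apply C_ext; simpl; ring. Qed.

Lemma c2_binf : c2 binf = C0. Proof. reflexivity. Qed.
Lemma c2_e3 : c2 e3v = C0. Proof. reflexivity. Qed.

Lemma exist_normal : forall q, in_C4pp q -> exists a z t, normal_params a z t /\
  equivQ q (normal_quad a z t) /\ cartan_is (q1 q) (q2 q) (q3 q) a.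
Proof.
  intros q (H1 & H2 & H3 & H4 & N12 & N13 & N14 & N23 & N24 & N34 & C123 & C234 & Orb).
  destruct (frame (q2 q) (q3 q) H2 H3 N23) as [g [Hg [Hg2 Hg3]]].
  set (y1 := Mapp g (q1 q)).
  assert (Hy1 : is_bpt y1) by (apply unitary_null; auto).
  assert (Hy1b : ~ same_line y1 binf).
  { intro H; apply N12; apply (sl_unMapp g); auto; eapply sl_trans; [exact H | now apply sl_sym]. }
  pose proof (not_binf_c3 y1 Hy1 Hy1b) as H3y1.
  destruct (normz_prop y1 Hy1 H3y1) as [Hc [[_ Hh] Hs]].
  set (y1' := normz y1) in *.
  set (w := c2 y1').
  assert (Hw : w <> C0).
  { intro Hw0; apply C123; apply (circle g); auto.
    - exact (sl_c2 _ _ Hs Hw0).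
    - exact (sl_c2 _ _ Hg2 c2_binf).
    - exact (sl_c2 _ _ Hg3 c2_e3). }
  set (nu := Cmul (RtoC (/ sqrt 2)) w).
  pose proof s2pos as S2.
  assert (Hnu : nu <> C0).
  { apply Cmul_neq0; auto. intro H; injection H; intros.
    apply (Rinv_neq_0_compat (sqrt 2)); lra. }
  assert (Hnu2 : Cmul nu (RtoC (sqrt 2)) = w).
  { unfold nu; destruct w; apply C_ext; simpl; field; lra. }
  set (tau := im (c1 y1') / Cnorm2 nu).
  pose proof (Dg_map y1' nu Hh Hc Hnu Hnu2) as HD. fold tau in HD.
  set (G := Mmul (Dg nu) g).
  assert (HG : unitary21 G) by (apply unitary_Mmul; auto; apply Dg_unitary; auto).
  assert (G2 : same_line (Mapp G (q2 q)) binf).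
  { unfold G; rewrite Mapp_Mmul; eapply sl_trans; [apply sl_Mapp; exact Hg2|].
    rewrite Dg_binf; apply sl_scale; apply Cinv_neq0, Cconj_neq0; auto. }
  assert (G3 : same_line (Mapp G (q3 q)) e3v).
  { unfold G; rewrite Mapp_Mmul; eapply sl_trans; [apply sl_Mapp; exact Hg3|].
    rewrite Dg_e3; apply sl_scale; auto. }
  assert (G1 : same_line (Mapp G (q1 q)) (bpt C1 tau)).
  { unfold G; rewrite Mapp_Mmul; fold y1; eapply sl_trans; [apply sl_Mapp; exact Hs|].
    rewrite HD; apply sl_scale; auto. }
  set (y4 := Mapp G (q4 q)).
  assert (Hy4 : is_bpt y4) by (apply unitary_null; auto).
  assert (Hy4b : ~ same_line y4 binf).
  { intro H; apply N24; apply (sl_unMapp G); auto; eapply sl_trans; [exact G2 | now apply sl_sym]. }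
  pose proof (not_binf_c3 y4 Hy4 Hy4b) as H3y4.
  destruct (normz_prop y4 Hy4 H3y4) as [Hc4 [[_ Hh4] Hs4]].
  set (y4' := normz y4) in *.
  set (z := zof y4'). set (t := tof y4').
  pose proof (bpt_of y4' Hh4 Hc4) as Hb4. fold z t in Hb4.
  assert (G4 : same_line (Mapp G (q4 q)) (bpt z t)) by (rewrite <- Hb4; exact Hs4).
  assert (Hz : z <> C0).
  { intro Hz0. apply C234. apply (circle G); auto.
    - exact (sl_c2 _ _ G2 c2_binf).
    - exact (sl_c2 _ _ G3 c2_e3).
    - apply (sl_c2 _ _ G4). rewrite Hz0; unfold bpt; cbn [c2]; ring. }
  destruct (unitary_inv G HG) as [HN [HL HR]].
  assert (Ht : t <> Cnorm2 z * tau).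
  { intro Ht. apply Orb.
    set (N := hinv G) in *. set (E := Dg (Cinv z)).
    assert (HE : unitary21 E) by (apply Dg_unitary, Cinv_neq0; auto).
    exists (Mmul N (Mmul E G)). split; [apply unitary_Mmul; [exact HN| apply unitary_Mmul; [exact HE | exact HG]]|].
    rewrite !Mapp_Mmul. split; [|split].
    - eapply sl_trans; [apply sl_Mapp, sl_Mapp; exact G2|].
      eapply sl_trans; [apply sl_Mapp; unfold E; rewrite Dg_binf; apply sl_scale;
        apply Cinv_neq0, Cconj_neq0, Cinv_neq0; auto|].
      eapply sl_trans; [apply sl_Mapp, sl_sym; exact G2|]. rewrite HL; apply sl_refl.
    - eapply sl_trans; [apply sl_Mapp, sl_Mapp; exact G3|].
      eapply sl_trans; [apply sl_Mapp; unfold E; rewrite Dg_e3; apply sl_scale;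
        apply Cinv_neq0; auto|].
      eapply sl_trans; [apply sl_Mapp, sl_sym; exact G3|]. rewrite HL; apply sl_refl.
    - eapply sl_trans; [apply sl_Mapp, sl_Mapp; exact G1|].
      apply (sl_trans _ (Mapp N (bpt z t))).
      + apply sl_Mapp. unfold E. rewrite E_map by auto. rewrite <- Ht.
        apply sl_scale, Cinv_neq0; auto.
      + eapply sl_trans; [apply sl_Mapp, sl_sym; exact G4|]. rewrite HL; apply sl_refl. }
  exists (atan tau), z, t.
  pose proof (atan_bound tau) as AB. rewrite <- (tan_atan tau) in Ht.
  split; [split; [lra|split; auto]|]. split.
  - exists G; split; auto. unfold normal_quad; cbn [q1 q2 q3 q4].
    rewrite tan_atan, e3_eq. repeat split; auto.
  - split; [lra|].
    destruct G1 as [l1 [Hl1 E1]], G2 as [l2 [Hl2 E2]], G3 as [l3 [Hl3 E3]].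
    replace e3v with (bpt C0 0) in E3 by (rewrite e3_eq; reflexivity).
    rewrite (cartan_scale G _ _ _ _ _ _ l1 l2 l3 HG E1 E2 E3), cartan_normal.
    pose proof (Cnorm2_pos l1 Hl1); pose proof (Cnorm2_pos l2 Hl2); pose proof (Cnorm2_pos l3 Hl3).
    set (K := Cnorm2 l1 * Cnorm2 l2 * Cnorm2 l3).
    assert (HK : K > 0) by (unfold K; apply Rmult_gt_0_compat; [apply Rmult_gt_0_compat|]; auto).
    assert (Hc0 : 0 < cos (atan tau)) by (apply cos_gt_0; lra).
    exists (K / cos (atan tau)). split; [apply Rdiv_lt_0_compat; lra|].
    apply C_ext; simpl.
    + field; lra.
    + rewrite <- (tan_atan tau) at 1. unfold tan. field; lra.
Qed.


Definition Idm : Mat3 := fun i j => if Nat.eqb i j then C1 else C0.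
Lemma Idm_app : forall v, Mapp Idm v = v.
Proof. intros; apply V_ext; unfold Mapp, row_app, Idm; simpl; ring. Qed.
Lemma equivQ_refl : forall q, equivQ q q.
Proof.
  intro q; exists Idm; split. intros v w; rewrite !Idm_app; auto.
  rewrite !Idm_app; repeat split; apply sl_refl.
Qed.

Lemma uniq_normal : forall q a z t a' z' t',
  normal_params a z t -> equivQ q (normal_quad a z t) ->
  normal_params a' z' t' -> equivQ q (normal_quad a' z' t') ->
  a = a' /\ z = z' /\ t = t'.
Proof.
  intros q a z t a' z' t' [Ha _] Hq [Ha' _] Hq'.
  destruct (equivQ_trans _ _ _ (equivQ_sym _ _ Hq) Hq') as [k [Hk [E1 [E2 [E3 E4]]]]].
  unfold normal_quad in *; cbn [q1 q2 q3 q4] in *. rewrite e3_eq in E3.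
  destruct (rigid k (tan a) (tan a') z t z' t' Hk E2 E3 E1 E4) as [T [Z T']].
  split; auto. rewrite <- (atan_tan a), <- (atan_tan a'), T; auto.
Qed.

Lemma c2_bpt_neq0 : forall z t, z <> C0 -> c2 (bpt z t) <> C0.
Proof.
  intros z t Hz; unfold bpt; cbn [c2]. apply Cmul_neq0; auto.
  pose proof s2pos. intro HH; injection HH; intros; lra.
Qed.

Lemma normal_in_C4pp : forall a z t, normal_params a z t -> in_C4pp (normal_quad a z t).
Proof.
  intros a z t [Ha [Hz Ht]]. unfold normal_quad, in_C4pp; cbn [q1 q2 q3 q4].
  split; [apply bpt_null|]. split; [apply binf_null|].
  split; [apply bpt_null|]. split; [apply bpt_null|].
  split; [apply sl_bpt_binf|].
  split; [intro H; apply sl_bpt in H; destruct H; now apply C1_neq_C0|].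
  split; [intro H; apply sl_bpt in H; destruct H as [H1 H2]; subst z;
          apply Ht; rewrite Cnorm2_C1; lra|].
  split; [apply sl_binf_bpt|]. split; [apply sl_binf_bpt|].
  split; [intro H; apply sl_bpt in H; destruct H as [H1 _]; now apply Hz|].
  rewrite e3_eq. split; [apply not_circle1, c2_bpt_neq0, C1_neq_C0|].
  split; [apply not_circle2, c2_bpt_neq0; auto|].
  intros [g [Hg [E2 [E3 E1]]]].
  apply Ht. exact (orbit_excl g (tan a) z t Hg E2 E3 E1).
Qed.

Theorem theorem4p1 :
  (forall q : Quad, in_C4pp q ->
     (exists a z t, normal_params a z t /\ equivQ q (normal_quad a z t) /\
        cartan_is (q1 q) (q2 q) (q3 q) a) /\
     (forall a z t a' z' t',
        normal_params a z t -> equivQ q (normal_quad a z t) ->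
        normal_params a' z' t' -> equivQ q (normal_quad a' z' t') ->
        a = a' /\ z = z' /\ t = t')) /\
  (forall q q' z t r z' t' r', in_C4pp q -> in_C4pp q' ->
     B0rel q z t r -> B0rel q' z' t' r' ->
     (equivQ q q' <-> (z = z' /\ t = t' /\ r = r'))) /\
  (forall q z t r, in_C4pp q -> B0rel q z t r -> in_Cprime z t r) /\
  (forall z t r, in_Cprime z t r -> exists q, in_C4pp q /\ B0rel q z t r).
Proof.
  split; [|split; [|split]].
  - intros q Hq; split; [now apply exist_normal|].
    intros; eapply uniq_normal; eauto.
  - intros q q' z t r z' t' r' _ _ [a [Pa [Ea Ra]]] [a' [Pa' [Ea' Ra']]]. split.
    + intro Hqq. destruct (uniq_normal q a z t a' z' t' Pa Ea Pa'
        (equivQ_trans _ _ _ Hqq Ea')) as [-> [-> ->]].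
      subst; auto.
    + intros [-> [-> ->]].
      assert (a = a').
      { destruct Pa as [Ba _], Pa' as [Ba' _]. rewrite Ra in Ra'.
        apply exp_inv in Ra'. rewrite <- (atan_tan a), <- (atan_tan a'), Ra'; auto. }
      subst a'. exact (equivQ_trans _ _ _ Ea (equivQ_sym _ _ Ea')).
  - intros q z t r _ [a [[Ba [Hz Ht]] [_ Ra]]]. split; auto.
    split; [rewrite Ra; apply exp_pos|].
    rewrite Ra, ln_exp. intro H. apply Ht. rewrite H.
    pose proof (Cnorm2_pos z Hz). field; lra.
  - intros z t r [Hz [Hr Hl]].
    assert (Hp : normal_params (atan (ln r)) z t).
    { pose proof (atan_bound (ln r)). split; [lra|split; auto].
      rewrite tan_atan. intro HH; apply Hl. rewrite HH.
      pose proof (Cnorm2_pos z Hz). field; lra. }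
    exists (normal_quad (atan (ln r)) z t). split; [now apply normal_in_C4pp|].
    exists (atan (ln r)). split; [auto|split; [apply equivQ_refl|]].
    rewrite tan_atan, exp_ln; auto.
Qed.
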